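(* A $T_1$-space $X$ has a regular base at non-isolated points if and only if $X$ is a Hausdorff paracompact space with a development at non-isolated points.
   Context: $I(X)$ is the set of isolated points of $X$, $\mathrm{st}(A,\mathcal{W})=\bigcup\{W\in\mathcal{W}:W\cap A\neq\emptyset\}$. A base $\mathcal{B}$ is regular at $x$ if for every neighborhood $U$ of $x$ there is an open $V$ with $x\in V\subset U$ such that $\{B\in\mathcal{B}: B\cap V\neq\emptyset,\ B\not\subset U\}$ is finite; it is a regular base at non-isolated points if it is regular at every $x\in X\setminus I(X)$. A sequence $\{\mathcal{W}_i\}_{i\in\mathbb{N}}$ of open covers of $X$ is a development at non-isolated points if for every $x\in X\setminus I(X)$ and every open neighborhood $U$ of $x$ there are an open neighborhood $V$ of $x$ and $i\in\mathbb{N}$ with $\mathrm{st}(V,\mathcal{W}_i)\subset U$. *)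

(* Defs.v *)
From Stdlib Require Import List Classical.

Set Implicit Arguments.

Definition set (X : Type) := X -> Prop.
Definition family (X : Type) := set X -> Prop.

Definition subset {X : Type} (A B : set X) : Prop := forall x, A x -> B x.
Definition meets {X : Type} (A B : set X) : Prop := exists x, A x /\ B x.
Definition set_eq {X : Type} (A B : set X) : Prop := forall x, A x <-> B x.

Definition finite_family {X : Type} (F : family X) : Prop :=
  exists l : list (set X), forall A, F A -> exists B, In B l /\ set_eq A B.

Record is_topology {X : Type} (op : family X) : Prop := {
  top_full : op (fun _ => True);
  top_inter : forall U V, op U -> op V -> op (fun x => U x /\ V x);
  top_union : forall F : family X, (forall U, F U -> op U) ->
                op (fun x => exists U, F U /\ U x)
}.

Section Topo.
Variables (X : Type) (op : family X).

Definition neighborhood (U : set X) (x : X) : Prop :=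
  exists V, op V /\ V x /\ subset V U.

Definition isolated (x : X) : Prop := op (fun y => y = x).

Definition T1 : Prop :=
  forall x y : X, x <> y -> exists U, op U /\ U x /\ ~ U y.

Definition Hausdorff : Prop :=
  forall x y : X, x <> y ->
    exists U V, op U /\ op V /\ U x /\ V y /\ ~ meets U V.

Definition open_cover (W : family X) : Prop :=
  (forall U, W U -> op U) /\ (forall x, exists U, W U /\ U x).

Definition refines (V U : family X) : Prop :=
  forall A, V A -> exists B, U B /\ subset A B.

Definition locally_finite (F : family X) : Prop :=
  forall x, exists U, neighborhood U x /\ finite_family (fun A => F A /\ meets A U).

Definition paracompact : Prop :=
  forall U : family X, open_cover U ->
    exists V : family X, open_cover V /\ refines V U /\ locally_finite V.

Definition is_base (B : family X) : Prop :=
  (forall A, B A -> op A) /\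
  (forall U x, op U -> U x -> exists A, B A /\ A x /\ subset A U).

Definition regular_at (B : family X) (x : X) : Prop :=
  forall U, neighborhood U x ->
    exists V, op V /\ V x /\ subset V U /\
      finite_family (fun A => B A /\ meets A V /\ ~ subset A U).

Definition regular_base_nonisolated (B : family X) : Prop :=
  is_base B /\ forall x, ~ isolated x -> regular_at B x.

Definition star (A : set X) (W : family X) : set X :=
  fun y => exists C, W C /\ meets C A /\ C y.

Definition development_nonisolated (W : nat -> family X) : Prop :=
  (forall i, open_cover (W i)) /\
  forall x, ~ isolated x -> forall U, op U -> U x ->
    exists V i, op V /\ V x /\ subset (star V (W i)) U.

End Topo.

(* Main.v *)
Require Import Defs.
From Stdlib Require Import List Classical FunctionalExtensionality PropExtensionality IndefiniteDescription Lia Arith.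

Lemma set_ext {X : Type} (A B : set X) : set_eq A B -> A = B.
Proof.
  intro H. apply functional_extensionality. intro x.
  apply propositional_extensionality. apply H.
Qed.

Lemma ff_sub {X : Type} (F G : family X) :
  finite_family F -> (forall A, G A -> F A) -> finite_family G.
Proof.
  intros [l Hl] H. exists l. intros A GA. apply Hl, H, GA.
Qed.

Lemma list_remove {T : Type} (l : list T) (b0 : T) : In b0 l ->
  exists l', length l' < length l /\ forall b, In b l -> b <> b0 -> In b l'.
Proof.
  induction l as [|a t IH]; simpl; intros Hin; [contradiction|].
  destruct (classic (a = b0)) as [E|NE].
  - exists t. split; [lia|]. intros b [Hb|Hb] Hne; [subst; contradiction| exact Hb].
  - destruct Hin as [Hin|Hin]; [contradiction|].
    destruct (IH Hin) as [t' [Hlen Ht']]. exists (a :: t'). simpl. split; [lia|].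
    intros b [Hb|Hb] Hne; [left; exact Hb| right; apply Ht'; auto].
Qed.

Lemma ff_union {X : Type} (F : nat -> family X) (n : nat) :
  (forall m, m < n -> finite_family (F m)) ->
  finite_family (fun A => exists m, m < n /\ F m A).
Proof.
  induction n as [|n IH]; intros H.
  - exists nil. intros A [m [Hm _]]. lia.
  - destruct IH as [l Hl]. { intros m Hm. apply H. lia. }
    destruct (H n (Nat.lt_succ_diag_r n)) as [l2 Hl2].
    exists (l ++ l2). intros A [m [Hm HF]].
    destruct (Nat.eq_dec m n) as [E|NE].
    + subst. destruct (Hl2 A HF) as [B [HB HE]]. exists B. split; [apply in_or_app; right; exact HB| exact HE].
    + destruct (Hl A) as [B [HB HE]]. { exists m. split; [lia| exact HF]. }
      exists B. split; [apply in_or_app; left; exact HB| exact HE].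
Qed.

Lemma maximal_lemma {X : Type} : forall n (l : list (set X)) (F : family X) A0,
  length l <= n -> (forall S, F S -> exists b, In b l /\ set_eq S b) -> F A0 ->
  exists M, F M /\ subset A0 M /\ forall S, F S -> subset M S -> subset S M.
Proof.
  induction n as [|n IH]; intros l F A0 Hlen Hl HA0.
  - destruct l; [|simpl in Hlen; lia].
    destruct (Hl A0 HA0) as [b [[] _]].
  - destruct (classic (forall S, F S -> subset A0 S -> subset S A0)) as [Hm|Hm].
    + exists A0. split; [exact HA0|]. split; [intros x h; exact h| exact Hm].
    + apply not_all_ex_not in Hm. destruct Hm as [S1 Hm].
      apply imply_to_and in Hm. destruct Hm as [FS1 Hm].
      apply imply_to_and in Hm. destruct Hm as [Sub1 NSub1].
      destruct (Hl A0 HA0) as [b0 [Hb0 Eb0]].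
      destruct (list_remove l b0 Hb0) as [l' [Hlen' Hl']].
      destruct (IH l' (fun S => F S /\ subset S1 S) S1) as [M [[FM S1M] [S1M' HM]]].
      * lia.
      * intros S [FS S1S]. destruct (Hl S FS) as [b [Hb Eb]]. exists b. split; [|exact Eb].
        apply Hl'; [exact Hb|]. intro E; subst b.
        apply NSub1. intros x h. apply Eb0. apply Eb. apply S1S. exact h.
      * split; [exact FS1| intros x h; exact h].
      * exists M. split; [exact FM|]. split.
        { intros x h. apply S1M', Sub1, h. }
        intros S FS MS. apply HM; [|exact MS]. split; [exact FS|].
        intros x h. apply MS, S1M', h.
Qed.

Lemma T1_compl {X : Type} (op : family X) : is_topology op -> T1 op ->
  forall y, op (fun z => z <> y).
Proof.
  intros Ht H1 y.
  assert (E : (fun z => z <> y) = (fun x => exists U, (op U /\ ~ U y) /\ U x)).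
  { apply set_ext. intro z. split.
    - intro hz. destruct (H1 z y hz) as [U [oU [Uz Uy]]]. exists U. tauto.
    - intros [U [[_ Uy] Uz]] E; subst; contradiction. }
  rewrite E. apply (top_union Ht). intros U [h _]; exact h.
Qed.

Fixpoint Wp {X : Type} (W : nat -> family X) (n : nat) : family X :=
  match n with
  | 0 => W 0
  | S n => fun T => exists A C, Wp W n A /\ W (S n) C /\ T = (fun z => A z /\ C z)
  end.

Lemma Wp_cover {X : Type} (op : family X) (Ht : is_topology op) (W : nat -> family X) :
  (forall i, open_cover op (W i)) -> forall n, open_cover op (Wp W n).
Proof.
  intros HW n. induction n as [|n IH]; simpl; [apply HW|].
  destruct IH as [IHo IHc]. split.
  - intros S [A [C [HA [HC ->]]]]. apply (top_inter Ht); [apply IHo, HA| apply (proj1 (HW (S n))), HC].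
  - intro x. destruct (IHc x) as [A [HA Ax]]. destruct (proj2 (HW (S n)) x) as [C [HC Cx]].
    exists (fun z => A z /\ C z). split; [exists A, C; tauto| tauto].
Qed.

Lemma Wp_ref {X : Type} (W : nat -> family X) : forall n S, Wp W n S ->
  forall i, i <= n -> exists C, W i C /\ subset S C.
Proof.
  induction n as [|n IH]; simpl; intros S HS i Hi.
  - assert (i = 0) by lia. subst. exists S. split; [exact HS| intros x h; exact h].
  - destruct HS as [A [C [HA [HC ->]]]].
    destruct (Nat.eq_dec i (S n)) as [E|NE].
    + subst. exists C. split; [exact HC| intros x h; apply h].
    + destruct (IH A HA i ltac:(lia)) as [C' [HC' Sub]]. exists C'. split; [exact HC'|].
      intros x h. apply Sub, h.
Qed.

Lemma converse_dir {X : Type} (op : family X) (Ht : is_topology op) :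
  paracompact op -> (exists W : nat -> family X, development_nonisolated op W) ->
  exists B : family X, regular_base_nonisolated op B.
Proof.
  intros Hpc [W [HWc HWd]].
  assert (HP : forall n, exists P, open_cover op P /\ refines P (Wp W n) /\ locally_finite op P).
  { intro n. apply Hpc. apply Wp_cover; assumption. }
  assert (HP2 : exists P : nat -> family X, forall n,
             open_cover op (P n) /\ refines (P n) (Wp W n) /\ locally_finite op (P n)).
  { exists (fun n => proj1_sig (constructive_indefinite_description _ (HP n))).
    intro n. exact (proj2_sig (constructive_indefinite_description _ (HP n))). }
  clear HP. destruct HP2 as [P HP].
  assert (Hsmall : forall m i A, i <= m -> P m A -> exists C, W i C /\ subset A C).
  { intros m i A Hi HA. destruct (HP m) as [_ [Href _]].
    destruct (Href A HA) as [S [HS SubS]]. destruct (Wp_ref W m S HS i Hi) as [C [HC SubC]].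
    exists C. split; [exact HC| intros x h; apply SubC, SubS, h]. }
  exists (fun A => (exists y, isolated op y /\ A = (fun z => z = y)) \/ exists n, P n A).
  split; [split|].
  - intros A [[y [Hy ->]]|[n Hn]]; [exact Hy| apply (proj1 (proj1 (HP n))), Hn].
  - intros U x oU Ux. destruct (classic (isolated op x)) as [Hx|Hx].
    + exists (fun z => z = x). split; [left; exists x; tauto|]. split; [reflexivity|].
      intros z ->; exact Ux.
    + destruct (HWd x Hx U oU Ux) as [V [i [oV [Vx Hst]]]].
      destruct (proj2 (proj1 (HP i)) x) as [A [HA Ax]].
      exists A. split; [right; exists i; exact HA|]. split; [exact Ax|].
      destruct (Hsmall i i A (le_n i) HA) as [C [HC SubC]].
      intros y Ay. apply Hst. exists C. split; [exact HC|]. split; [exists x; split; [apply SubC, Ax| exact Vx]|].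
      apply SubC, Ay.
  - intros x Hx U [U0 [oU0 [U0x SubU0]]].
    destruct (HWd x Hx U0 oU0 U0x) as [V [i [oV [Vx Hst]]]].
    assert (VU0 : subset V U0).
    { intros y Vy. apply Hst. destruct (proj2 (HWc i) y) as [C [HC Cy]].
      exists C. split; [exact HC|]. split; [exists y; tauto| exact Cy]. }
    assert (Hnb : forall n, exists V', op V' /\ V' x /\ subset V' V /\
               forall m, m < n -> finite_family (fun A => P m A /\ meets A V')).
    { induction n as [|n IH].
      - exists V. split; [exact oV|]. split; [exact Vx|]. split; [intros y h; exact h| intros m Hm; lia].
      - destruct IH as [V' [oV' [V'x [V'V Hfin]]]].
        destruct (proj2 (proj2 (HP n)) x) as [N [[N0 [oN0 [N0x SubN0]]] HfinN]].
        exists (fun z => V' z /\ N0 z). split; [apply (top_inter Ht); assumption|].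
        split; [tauto|]. split; [intros y h; apply V'V, h|].
        intros m Hm. destruct (Nat.eq_dec m n) as [E|NE].
        + subst. apply (ff_sub _ _ HfinN). intros A [HA [y [Ay [_ Ny]]]].
          split; [exact HA| exists y; split; [exact Ay| apply SubN0, Ny]].
        + apply (ff_sub _ _ (Hfin m ltac:(lia))). intros A [HA [y [Ay [Vy _]]]].
          split; [exact HA| exists y; tauto]. }
    destruct (Hnb i) as [V' [oV' [V'x [V'V Hfin]]]].
    exists V'. split; [exact oV'|]. split; [exact V'x|].
    split; [intros y h; apply SubU0, VU0, V'V, h|].
    apply (ff_sub _ _ (ff_union (fun m A => P m A /\ meets A V') i Hfin)).
    intros A [[[y [Hy ->]]|[m Hm]] [Hmeet Hnsub]].
    + exfalso. apply Hnsub. intros z ->. destruct Hmeet as [w [-> Vw]].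
      apply SubU0, VU0, V'V, Vw.
    + exists m. split; [|split; assumption].
      destruct (le_lt_dec i m) as [Hle|Hlt]; [|exact Hlt].
      exfalso. apply Hnsub. destruct (Hsmall m i A Hle Hm) as [C [HC SubC]].
      destruct Hmeet as [w [Aw V'w]].
      intros y Ay. apply SubU0, Hst. exists C. split; [exact HC|].
      split; [exists w; split; [apply SubC, Aw| apply V'V, V'w]| apply SubC, Ay].
Qed.

Lemma sup_finite {X : Type} (op : family X) (B : family X) :
  regular_base_nonisolated op B -> forall z A, ~ isolated op z -> B A -> A z ->
  finite_family (fun S => B S /\ subset A S).
Proof.
  intros [[Bo Bb] Hreg] z A Hz HA Az.
  destruct (Hreg z Hz A) as [V [oV [Vz [VA [l Hl]]]]].
  { exists A. split; [apply Bo, HA| split; [exact Az| intros y h; exact h]]. }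
  exists (A :: l). intros S [HS AS]. destruct (classic (subset S A)) as [SA|SA].
  - exists A. split; [left; reflexivity| intro y; split; [apply SA| apply AS]].
  - destruct (Hl S) as [b [Hb Eb]]. { split; [exact HS|]. split; [exists z; split; [apply AS, Az| exact Vz]| exact SA]. }
    exists b. split; [right; exact Hb| exact Eb].
Qed.

Lemma hausdorff_dir {X : Type} (op : family X) (Ht : is_topology op) (H1 : T1 op) B :
  regular_base_nonisolated op B -> Hausdorff op.
Proof.
  intros HB x y Hxy. pose proof HB as [[Bo Bb] Hreg].
  destruct (classic (isolated op x)) as [Hx|Hx].
  - exists (fun z => z = x), (fun z => z <> x). split; [exact Hx|].
    split; [apply T1_compl; assumption|]. split; [reflexivity|]. split; [auto|].
    intros [w [-> Hw]]. apply Hw; reflexivity.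
  - destruct (Hreg x Hx (fun z => z <> y)) as [V [oV [Vx [VU [l Hl]]]]].
    { exists (fun z => z <> y). split; [apply T1_compl; assumption|]. split; [exact Hxy| intros w h; exact h]. }
    assert (HG : forall l' : list (set X), exists G, op G /\ G y /\
              forall b, In b l' -> meets b V -> exists z, b z /\ ~ G z).
    { induction l' as [|b t IH].
      - exists (fun _ => True). split; [apply (top_full Ht)|]. split; [exact I| intros b []].
      - destruct IH as [G [oG [Gy HGt]]].
        destruct (classic (meets b V)) as [[z [bz Vz]]|Hnm].
        + exists (fun w => G w /\ w <> z). split.
          { apply (top_inter Ht); [exact oG| apply T1_compl; assumption]. }
          split. { split; [exact Gy|]. intro E; subst. apply (VU z Vz). reflexivity. }
          intros b' [Eb|Hb] Hm.
          * subst b'. exists z. split; [exact bz| intros [_ h]; apply h; reflexivity].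
          * destruct (HGt b' Hb Hm) as [w [bw Gw]]. exists w. split; [exact bw| intros [h _]; auto].
        + exists G. split; [exact oG|]. split; [exact Gy|].
          intros b' [Eb|Hb] Hm; [subst; contradiction| apply HGt; assumption]. }
    destruct (HG l) as [G [oG [Gy HGl]]].
    destruct (Bb G y oG Gy) as [A [HA [Ay AG]]].
    exists V, A. split; [exact oV|]. split; [apply Bo, HA|]. split; [exact Vx|]. split; [exact Ay|].
    intros [w [Vw Aw]].
    destruct (Hl A) as [b [Hb Eb]].
    { split; [exact HA|]. split; [exists w; tauto|]. intro S. apply (S y Ay). reflexivity. }
    destruct (HGl b Hb) as [z [bz Gz]].
    { exists w. split; [apply Eb, Aw| exact Vw]. }
    apply Gz, AG, Eb, bz.
Qed.

Fixpoint Wc {X : Type} (op : family X) (B : family X) (n : nat) : family X :=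
  match n with
  | 0 => fun A => B A /\ exists z, ~ isolated op z /\ A z
  | S n => fun A => (B A /\ exists z, ~ isolated op z /\ A z) /\
            exists A', Wc op B n A' /\ subset A A' /\ ~ subset A' A
  end.

Lemma Wc_base {X : Type} (op : family X) B n A : Wc op B n A -> B A /\ exists z, ~ isolated op z /\ A z.
Proof. destruct n; simpl; tauto. Qed.

Lemma Wc_mono {X : Type} (op : family X) B : forall n A, Wc op B (S n) A -> Wc op B n A.
Proof.
  induction n as [|n IH]; intros A H.
  - simpl in *. tauto.
  - destruct H as [H0 [A' [HA' [s ns]]]]. split; [exact H0|].
    exists A'. split; [apply IH, HA'| tauto].
Qed.

Lemma Wc_mono_le {X : Type} (op : family X) B : forall n m A, n <= m -> Wc op B m A -> Wc op B n A.
Proof.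
  intros n m A Hle. induction Hle; [auto|]. intro H. apply IHHle, Wc_mono, H.
Qed.

Lemma Wc_bound {X : Type} (op : family X) B : forall m A (l : list (set X)),
  (forall S, B S -> subset A S -> exists b, In b l /\ set_eq S b) -> length l <= m -> ~ Wc op B m A.
Proof.
  induction m as [|m IH]; intros A l Hl Hlen HW.
  - destruct l; [|simpl in Hlen; lia]. destruct (Hl A) as [b [[] _]].
    + apply (Wc_base op B 0 A HW). + intros x h; exact h.
  - destruct HW as [[HA _] [A' [HA' [AA' nA'A]]]].
    destruct (Hl A HA (fun x h => h)) as [b0 [Hb0 Eb0]].
    destruct (list_remove l b0 Hb0) as [l' [Hlen' Hl']].
    apply (IH A' l'); [| lia | exact HA'].
    intros S HS A'S. destruct (Hl S HS (fun x h => A'S x (AA' x h))) as [b [Hb Eb]].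
    exists b. split; [|exact Eb]. apply Hl'; [exact Hb|]. intro E; subst b.
    apply nA'A. intros x h. apply Eb0, Eb, A'S, h.
Qed.

Lemma Wc_cover {X : Type} (op : family X) (Ht : is_topology op) (H1 : T1 op) B :
  regular_base_nonisolated op B -> forall n x U, ~ isolated op x -> op U -> U x ->
  exists A, Wc op B n A /\ A x /\ subset A U.
Proof.
  intros [[Bo Bb] Hreg]. induction n as [|n IH]; intros x U Hx oU Ux.
  - destruct (Bb U x oU Ux) as [A [HA [Ax AU]]]. exists A. split; [split; [exact HA| exists x; tauto]|]. tauto.
  - destruct (IH x U Hx oU Ux) as [A [HA [Ax AU]]].
    assert (Hy : exists y, A y /\ y <> x).
    { apply NNPP. intro Hn. apply Hx.
      assert (E : A = (fun z => z = x)).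
      { apply set_ext. intro z. split; [|intros ->; exact Ax].
        intro Az. apply NNPP. intro Hz. apply Hn. exists z. tauto. }
      unfold isolated. rewrite <- E. apply Bo. apply (Wc_base op B n A HA). }
    destruct Hy as [y [Ay Hyx]].
    destruct (Bb (fun z => A z /\ z <> y) x) as [A'' [HA'' [A''x A''sub]]].
    { apply (top_inter Ht); [apply Bo, (Wc_base op B n A HA)| apply T1_compl; assumption]. }
    { split; [exact Ax| auto]. }
    exists A''. split; [|split; [exact A''x| intros z h; apply AU, A''sub, h]].
    split; [split; [exact HA''| exists x; tauto]|].
    exists A. split; [exact HA|]. split; [intros z h; apply A''sub, h|].
    intro S. destruct (A''sub y (S y Ay)) as [_ h]. apply h; reflexivity.
Qed.

Lemma list_max_N {T : Type} (P : nat -> T -> Prop) (l : list T) :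
  (forall n m b, n <= m -> P n b -> P m b) ->
  (forall b, In b l -> exists N, P N b) -> exists N, forall b, In b l -> P N b.
Proof.
  intros Hmono. induction l as [|a t IH]; intros H.
  - exists 0. intros b [].
  - destruct IH as [N1 HN1]. { intros b Hb. apply H. right; exact Hb. }
    destruct (H a (or_introl eq_refl)) as [N2 HN2].
    exists (N1 + N2). intros b [E|Hb].
    + subst. apply (Hmono N2); [lia| exact HN2].
    + apply (Hmono N1); [lia| apply HN1, Hb].
Qed.

Lemma develop_dir {X : Type} (op : family X) (Ht : is_topology op) (H1 : T1 op) B :
  regular_base_nonisolated op B -> exists W : nat -> family X, development_nonisolated op W.
Proof.
  intros HB. pose proof HB as [[Bo Bb] Hreg].
  exists (fun n A => Wc op B n A \/ exists y, isolated op y /\ A = (fun z => z = y)).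
  split.
  - intro n. split.
    + intros A [HA|[y [Hy ->]]]; [apply Bo, (Wc_base op B n A HA)| exact Hy].
    + intro x. destruct (classic (isolated op x)) as [Hx|Hx].
      * exists (fun z => z = x). split; [right; exists x; tauto| reflexivity].
      * destruct (Wc_cover op Ht H1 B HB n x (fun _ => True) Hx (top_full Ht) I) as [A [HA [Ax _]]].
        exists A. split; [left; exact HA| exact Ax].
  - intros x Hx U oU Ux.
    destruct (Hreg x Hx U) as [V [oV [Vx [VU [l Hl]]]]].
    { exists U. split; [exact oU| split; [exact Ux| intros y h; exact h]]. }
    destruct (list_max_N (fun N b => ~ Wc op B N b) l) as [N HN].
    { intros n m b Hnm Hn Hm. apply Hn. apply (Wc_mono_le op B n m b Hnm Hm). }
    { intros b Hb. destruct (classic (exists z, ~ isolated op z /\ b z /\ B b)) as [[z [Hz [bz Bb']]]|Hn].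
      - destruct (sup_finite op B HB z b Hz Bb' bz) as [l2 Hl2].
        exists (length l2). apply (Wc_bound op B (length l2) b l2); [|lia].
        intros S HS bS. apply Hl2. tauto.
      - exists 0. intro H0. apply Hn. destruct H0 as [Bb' [z [Hz bz]]]. exists z. tauto. }
    exists V, N. split; [exact oV|]. split; [exact Vx|].
    intros y [C [HCs [[v [Cv Vv]] Cy]]]. destruct HCs as [HC|[w [Hw EC]]].
    + apply NNPP. intro nUy.
      destruct (Hl C) as [b [Hb Eb]].
      { split; [apply (Wc_base op B N C HC)|]. split; [exists v; tauto|]. intro S; apply nUy, S, Cy. }
      apply (HN b Hb). rewrite <- (set_ext C b Eb). exact HC.
    + subst C. subst. apply VU. exact Vv.
Qed.

Lemma para_dir {X : Type} (op : family X) (Ht : is_topology op) (H1 : T1 op) B :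
  regular_base_nonisolated op B -> paracompact op.
Proof.
  intros HB. pose proof HB as [[Bo Bb] Hreg].
  intros Cov [Covo Covc].
  set (C := fun A => B A /\ (exists z, ~ isolated op z /\ A z) /\ exists U, Cov U /\ subset A U).
  set (Max := fun M => C M /\ forall A, C A -> subset M A -> subset A M).
  assert (HMax : forall x, ~ isolated op x -> exists M, Max M /\ M x).
  { intros x Hx. destruct (Covc x) as [U [HU Ux]].
    destruct (Bb U x (Covo U HU) Ux) as [A [HA [Ax AU]]].
    destruct (sup_finite op B HB x A Hx HA Ax) as [l Hl].
    destruct (maximal_lemma (length l) l (fun S => C S /\ subset A S) A (le_n _)) as [M [[CM AM] [_ HM]]].
    - intros S [[HS _] AS]. apply Hl. tauto.
    - split; [|intros y h; exact h]. split; [exact HA|]. split; [exists x; tauto| exists U; tauto].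
    - exists M. split; [|apply AM, Ax]. split; [exact CM|].
      intros S CS MS. apply HM; [split; [exact CS| intros y h; apply MS, AM, h]| exact MS]. }
  set (FO := fun V => op V /\ exists M0, Max M0 /\ subset V M0 /\
                 finite_family (fun M => Max M /\ meets M V)).
  set (O := fun z => exists V, FO V /\ V z).
  assert (oO : op O). { apply (top_union Ht). intros V [h _]; exact h. }
  assert (HO : forall x, ~ isolated op x -> O x).
  { intros x Hx. destruct (HMax x Hx) as [M0 [HM0 M0x]].
    destruct (Hreg x Hx M0) as [V [oV [Vx [VM0 [l Hl]]]]].
    { exists M0. split; [apply Bo, (proj1 (proj1 HM0))| split; [exact M0x| intros y h; exact h]]. }
    exists V. split; [|exact Vx]. split; [exact oV|]. exists M0. split; [exact HM0|]. split; [exact VM0|].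
    exists (M0 :: l). intros M [HM Hmeet]. destruct (classic (subset M M0)) as [S|S].
    - exists M0. split; [left; reflexivity|]. intro y. split; [apply S|].
      intro h. exact (proj2 HM M0 (proj1 HM0) S y h).
    - destruct (Hl M) as [b [Hb Eb]]. { split; [apply (proj1 (proj1 HM))| split; [exact Hmeet| exact S]]. }
      exists b. split; [right; exact Hb| exact Eb]. }
  exists (fun S => (exists M, Max M /\ S = (fun w => M w /\ O w)) \/
                   (exists y, ~ O y /\ S = (fun w => w = y))).
  assert (Hiso : forall y, ~ O y -> isolated op y).
  { intros y Hy. apply NNPP. intro H. apply Hy, HO, H. }
  split; [split|split].
  - intros S [[M [HM ->]]|[y [Hy ->]]].
    + apply (top_inter Ht); [apply Bo, (proj1 (proj1 HM))| exact oO].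
    + apply Hiso, Hy.
  - intro x. destruct (classic (O x)) as [Ox|Ox].
    + destruct Ox as [V [[oV [M0 [HM0 [VM0 HfV]]]] Vx]].
      exists (fun w => M0 w /\ O w). split; [left; exists M0; tauto|].
      split; [apply VM0, Vx| exists V; split; [split; [exact oV| exists M0; tauto]| exact Vx]].
    + exists (fun w => w = x). split; [right; exists x; tauto| reflexivity].
  - intros S [[M [HM ->]]|[y [Hy ->]]].
    + destruct HM as [[_ [_ [U [HU MU]]]] _]. exists U. split; [exact HU| intros w h; apply MU, h].
    + destruct (Covc y) as [U [HU Uy]]. exists U. split; [exact HU| intros w ->; exact Uy].
  - intro x. destruct (classic (O x)) as [Ox|Ox].
    + destruct Ox as [V [[oV [M0 [HM0 [VM0 [l Hl]]]]] Vx]].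
      exists V. split; [exists V; split; [exact oV| split; [exact Vx| intros w h; exact h]]|].
      exists (map (fun b => fun w => b w /\ O w) l).
      intros S [[[M [HM ->]]|[y [Hy ->]]] Hmeet].
      * destruct (Hl M) as [b [Hb Eb]].
        { split; [exact HM|]. destruct Hmeet as [w [[Mw _] Vw]]. exists w; tauto. }
        exists (fun w => b w /\ O w). split; [apply (in_map (fun (b0 : set X) (w : X) => b0 w /\ O w) l b Hb)|].
        intro w. specialize (Eb w). tauto.
      * exfalso. destruct Hmeet as [w [-> Vw]]. apply Hy. exists V.
        split; [split; [exact oV| exists M0; split; [exact HM0| split; [exact VM0| exists l; exact Hl]]]| exact Vw].
    + exists (fun w => w = x). split; [exists (fun w => w = x); split; [apply Hiso, Ox| split; [reflexivity| intros w h; exact h]]|].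
      exists ((fun w => w = x) :: nil). intros S [[[M [HM ->]]|[y [Hy ->]]] Hmeet].
      * exfalso. destruct Hmeet as [w [[_ Ow] ->]]. exact (Ox Ow).
      * destruct Hmeet as [w [-> ->]]. exists (fun w => w = x). split; [left; reflexivity| intro; tauto].
Qed.

Theorem mainTheorem6 (X : Type) (op : family X) (Htop : is_topology op)
  (HT1 : T1 op) :
  (exists B : family X, regular_base_nonisolated op B) <->
  (Hausdorff op /\ paracompact op /\
   exists W : nat -> family X, development_nonisolated op W).
Proof.
  split.
  - intros [B HB]. split; [exact (hausdorff_dir op Htop HT1 B HB)|].
    split; [exact (para_dir op Htop HT1 B HB)| exact (develop_dir op Htop HT1 B HB)].
  - intros [_ [Hp Hd]]. exact (converse_dir op Htop Hp Hd).
Qed.
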